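(* Let $n\ge 2$, let $q\in\{2,\dots,n\}$ and let $r_1,\dots,r_q\in\mathbb{N}$. Let $X\in\mathcal{H}_{0,r_1,\dots,r_q}$ satisfy $$B_1B_2\cdots B_q X=0 .$$ Then $X=0$.
   Context: Fix $n\ge 1$ and $s\ge 1$. For integers $k,l_1,\dots,l_s$, let $\mathcal{H}_{k,l_1,\dots,l_s}$ denote the real vector space of arrays $X^{J_1,\dots,J_s}_{i_1\dots i_k}$, where all indices range over $\{1,\dots,n\}$, each $J_\alpha=(j^{\alpha}_1,\dots,j^{\alpha}_{l_\alpha})$ is a string of $l_\alpha$ indices, the array is totally antisymmetric in $i_1,\dots,i_k$ and totally symmetric in the indices of each $J_\alpha$ separately. By convention $\mathcal{H}_{k,l_1,\dots,l_s}=0$ if some index $k,l_1,\dots,l_s$ is negative or if $k>n$. (Equivalently, $\mathcal{H}_{k,l_1,\dots,l_s}$ is the subspace of $\mathcal{F}^{-}(\mathbb{R}^n)\otimes\mathcal{F}^{+}(\mathbb{R}^n)^{\otimes s}$ with $k$ fermions and $l_\alpha$ bosons of type $\alpha$.) Denote by $\mathcal{S}^{+}_{a_1,\dots,a_p}$ (resp. $\mathcal{S}^{-}_{a_1,\dots,a_p}$) the symmetrization (resp. antisymmetrization) in the listed indices, normalized by $1/p!$. For $\alpha=1,\dots,s$ the operator $B_\alpha:\mathcal{H}_{k,l_1,\dots,l_s}\to\mathcal{H}_{k+1,l_1,\dots,l_\alpha+1,\dots,l_s}$ (in Fock language $B_\alpha=\sum_i b^{*}_{(\alpha)i}a^{*i}$)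 is defined by $$(B_\alpha X)^{J_1,\dots,J_{\alpha-1},\{j_0,j_1,\dots,j_l\},J_{\alpha+1},\dots,J_s}_{i_0i_1\dots i_k}=\mathcal{S}^{+}_{j_0,\dots,j_l}\,\mathcal{S}^{-}_{i_0,\dots,i_k}\,\delta^{j_0}_{i_0}\,X^{J_1,\dots,J_{\alpha-1},\{j_1,\dots,j_l\},J_{\alpha+1},\dots,J_s}_{i_1\dots i_k},$$ where $l=l_\alpha$ (the result is $0$ if $k+1>n$). *)

(* Defs.v *)
From mathcomp Require Import all_boot all_order all_algebra all_fingroup.
From mathcomp Require Import reals.
Set Implicit Arguments. Unset Strict Implicit. Unset Printing Implicit Defensive.
Import Order.TTheory GRing.Theory Num.Theory.
Local Open Scope ring_scope.

(* An array X^{J_1,...,J_s}_{i_1...i_k} is encoded as a function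
   X : seq 'I_n -> seq (seq 'I_n) -> R, where the first argument is the
   string of fermionic (lower) indices (i_1..i_k) and the second is the list
   [J_1; ...; J_s] of bosonic index strings.  Values at index data of the
   wrong shape are required to be 0 (see [inH]). *)
Definition arr (R : Type) (n : nat) := seq 'I_n -> seq (seq 'I_n) -> R.

Definition permseq (n : nat) (s : seq 'I_n) (sigma : 'S_(size s)) : seq 'I_n :=
  [seq tnth (in_tuple s) (sigma i) | i <- enum 'I_(size s)].

Definition inH (R : realType) (n : nat) (k : nat) (l : seq nat) (X : arr R n) : Prop :=
  [/\ (forall I J, X I J != 0 -> size I = k /\ map size J = l),
      (forall I J (sigma : 'S_(size I)),
          X (permseq sigma) J = (-1) ^+ odd_perm sigma * X I J)
    & (forall I J (a : nat) (tau : 'S_(size (nth [::] J a))), (a < size J)%N ->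
          X I (set_nth [::] J a (permseq tau)) = X I J)].

(* B_alpha, alpha = a+1 (0-based index a):
   (B X)^{..., {j0..jl}, ...}_{i0..ik} =
     S^+_{j0..jl} S^-_{i0..ik} delta^{j0}_{i0} X^{..., {j1..jl}, ...}_{i1..ik},
   with normalisations 1/(l+1)! and 1/(k+1)!. *)
Definition Bop (R : realType) (n : nat) (a : nat) (X : arr R n) : arr R n :=
  fun I J =>
    let Ja := nth [::] J a in
    if (0 < size I)%N && (a < size J)%N && (0 < size Ja)%N then
      (((size Ja)`!)%:R)^-1 * (((size I)`!)%:R)^-1 *
      \sum_(tau : 'S_(size Ja)) \sum_(sigma : 'S_(size I))
         (-1) ^+ odd_perm sigma *
         ((ohead (permseq sigma) == ohead (permseq tau))%:R *
          X (behead (permseq sigma)) (set_nth [::] J a (behead (permseq tau))))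
    else 0.

(* Main.v *)
Require Import Defs.
From mathcomp Require Import all_boot all_order all_algebra all_fingroup.
From mathcomp Require Import reals.
Import Order.TTheory GRing.Theory Num.Theory.
Set Implicit Arguments. Unset Strict Implicit. Unset Printing Implicit Defensive.
Local Open Scope ring_scope.

Lemma eq_seq_I n (s1 s2 : seq 'I_n) : size s1 = size s2 ->
  (forall x0 i, (i < size s1)%N -> nth x0 s1 i = nth x0 s2 i) -> s1 = s2.
Proof.
case: s1 => [|x s1'] in s2 *; first by move/esym/size0nil.
by move=> Hs H; apply: (@eq_from_nth _ x) => // i; apply: H.
Qed.

Lemma size_permseq n (s : seq 'I_n) (sg : 'S_(size s)) : size (permseq sg) = size s.
Proof. by rewrite size_map size_enum_ord. Qed.

Lemma nth_permseq n x0 (s : seq 'I_n) (sg : 'S_(size s)) i (Hi : (i < size s)%N) :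
  nth x0 (permseq sg) i = nth x0 s (sg (Ordinal Hi)).
Proof.
rewrite /permseq (nth_map (Ordinal Hi)) ?size_enum_ord //.
have -> : nth (Ordinal Hi) (enum 'I_(size s)) i = Ordinal Hi.
  by apply: ord_inj; rewrite /= nth_enum_ord.
by rewrite (tnth_nth x0).
Qed.

Lemma perm_permseq n (s : seq 'I_n) (sg : 'S_(size s)) : perm_eq (permseq sg) s.
Proof.
apply/(@tuple_permP _ _ _ (in_tuple s)); exists sg.
by rewrite /permseq /= enumT unlock /= ?ord_enumE.
Qed.

Lemma permseq_mul n (s : seq 'I_n) (rho : 'S_(size s)) (sg : 'S_(size (permseq rho))) :
  permseq (s:=permseq rho) sg = permseq (cast_perm (size_permseq rho) sg * rho).
Proof.
apply: eq_seq_I; first exact: (etrans (size_permseq sg) (etrans (size_permseq rho) (esym (size_permseq _)))).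
move=> x0 i Hi.
have Hi0 : (i < size (permseq rho))%N by move: Hi; rewrite (size_permseq sg).
have Hi' : (i < size s)%N by move: Hi0; rewrite (size_permseq rho).
rewrite (nth_permseq _ _ Hi0) (nth_permseq _ _ Hi') permM cast_permE.
have Hj : (sg (Ordinal Hi0) < size s)%N := leq_trans (ltn_ord _) (eq_leq (size_permseq rho)).
rewrite (nth_permseq _ _ Hj); congr (nth _ _ (rho _)); apply: ord_inj => //=.
by congr (nat_of_ord (sg _)); apply: ord_inj.
Qed.

Lemma odd_cast m k (e : m = k) (mu : 'S_m) : odd_perm (cast_perm e mu) = odd_perm mu.
Proof. by case: k / e; rewrite cast_perm_id. Qed.

Lemma sum_permseq (R : realType) n (F : seq 'I_n -> R) s (rho : 'S_(size s)) :
  \sum_(sg : 'S_(size (permseq rho))) (-1) ^+ odd_perm sg * F (permseq (s:=permseq rho) sg) =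
  (-1) ^+ odd_perm rho * \sum_(sg : 'S_(size s)) (-1) ^+ odd_perm sg * F (permseq sg).
Proof.
under eq_bigr do rewrite permseq_mul.
set e := size_permseq rho.
rewrite (reindex (cast_perm (esym e))); last first.
  by exists (cast_perm e) => x _; rewrite ?cast_permK ?cast_permKV.
rewrite (eq_bigr (fun x => (-1) ^+ odd_perm x * F (permseq (x * rho)))); last by move=> x _; rewrite cast_permKV odd_cast.
rewrite [in RHS](reindex_inj (mulIg rho)) mulr_sumr; apply: eq_bigr => mu _.
by rewrite odd_permM signr_addb mulrA [X in _ = X * _]mulrCA -expr2 sqrr_sign mulr1.
Qed.

Lemma Bop_anti (R : realType) n a (Y : arr R n) I J (rho : 'S_(size I)) :
  Bop a Y (permseq rho) J = (-1) ^+ odd_perm rho * Bop a Y I J.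
Proof.
rewrite /Bop.
have -> : (0 < size (permseq rho))%N = (0 < size I)%N by rewrite size_permseq.
have -> : ((size (permseq rho))`!)%:R = ((size I)`!)%:R :> R by rewrite size_permseq.
case: ifP => _; last by rewrite mulr0.
rewrite mulrCA; congr (_ * _); rewrite mulr_sumr; apply: eq_bigr => tau _.
exact: (sum_permseq (fun s => ((ohead s == ohead (permseq tau))%:R *
   Y (behead s) (set_nth [::] J a (behead (permseq tau))))) rho).
Qed.

Lemma sum_lift0 (R : realType) k (G : 'S_k.+1 -> R) :
  \sum_(sg : 'S_k.+1) (sg ord0 == ord0)%:R * G sg =
  \sum_(rho : 'S_k) G (lift_perm ord0 ord0 rho).
Proof.
under eq_bigr do rewrite mulr_natl mulrb.
rewrite -big_mkcond /=.
rewrite (reindex (lift_perm ord0 ord0)); last first.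
  pose ulsf i (s : 'S_k.+1) j := odflt j (unlift (s i) (s (lift i j))).
  have ulsfK i (s : 'S_k.+1) j: lift (s i) (ulsf i s j) = s (lift i j).
    rewrite /ulsf; have:= neq_lift i j.
    by rewrite -(can_eq (permK s)) => /unlift_some[] ? ? ->.
  have inj_ulsf: injective (ulsf ord0 _).
    move=> s; apply: can_inj (ulsf (s ord0) s^-1%g) _ => j'.
    by rewrite {1}/ulsf ulsfK !permK liftK.
  exists (fun s => perm (inj_ulsf s)) => [s _ | s].
    by apply/permP=> j'; rewrite permE /ulsf lift_perm_lift lift_perm_id liftK.
  move/(s _ =P _) => si0; apply/permP=> j.
  case: (unliftP ord0 j) => [j'|] ->; rewrite ?lift_perm_id //.
  by rewrite lift_perm_lift permE -{1}si0 ulsfK.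
by apply: eq_bigl => rho; rewrite lift_perm_id eqxx.
Qed.

Lemma ohead_permseq n (x : 'I_n) s (sg : 'S_(size s).+1) :
  ohead (permseq (s:=x::s) sg) = Some (nth x (x::s) (sg ord0)).
Proof. by rewrite /permseq enum_ordSl /= (tnth_nth x). Qed.

Lemma behead_permseq_lift n (x : 'I_n) s (rho : 'S_(size s)) :
  behead (permseq (s:=x::s) (lift_perm ord0 ord0 rho)) = permseq rho.
Proof.
apply: eq_seq_I.
  by rewrite size_behead (size_permseq (s:=x::s)) size_permseq.
move=> x0 i Hi.
have Hi1 : (i.+1 < size (x::s))%N.
  by move: Hi; rewrite size_behead (size_permseq (s:=x::s)).
have Hi2 : (i < size s)%N by [].
rewrite nth_behead (nth_permseq _ _ Hi1) (nth_permseq _ _ Hi2).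
have -> : Ordinal Hi1 = lift ord0 (Ordinal Hi2) by apply: ord_inj.
by rewrite lift_perm_lift.
Qed.

Lemma nth_head_eq n (x : 'I_n) s (j : 'I_(size s).+1) :
  x \notin s -> (nth x (x::s) j == x) = (j == ord0).
Proof.
move=> Hx; case: j => [[|j] Hj] //=; first by rewrite !eqxx.
have : nth x s j \in s by apply: mem_nth.
by case: eqP => // ->; rewrite (negbTE Hx).
Qed.

Lemma perm_eq_permseq n (L K : seq 'I_n) : perm_eq L K ->
  exists p : 'S_(size K), L = permseq p.
Proof.
move=> H; have /(@tuple_permP _ _ _ (in_tuple K)) [p Hp] := H.
by exists p; rewrite Hp /permseq /= enumT unlock /= ?ord_enumE.
Qed.

Lemma perm_behead n (A B : seq 'I_n) : perm_eq A B -> ohead A = ohead B ->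
  perm_eq (behead A) (behead B).
Proof.
case: A => [|x A]; case: B => [|y B] //= H [Exy].
by move: H; rewrite Exy perm_cons.
Qed.

Lemma count_behead_permseq n (p : pred 'I_n) s (tau : 'S_(size s)) :
  (count p s <= count p (behead (permseq tau)) + 1)%N.
Proof.
rewrite -(seq.permP (perm_permseq tau)).
case: (permseq tau) => [|y t] //=; rewrite addnC leq_add2l; by case: (p y).
Qed.

From mathcomp Require Import zify.

Definition wt n q (J : seq (seq 'I_n)) : nat :=
  \sum_(b < q) count (fun x : 'I_n => nat_of_ord x == b) (nth [::] J b).

Lemma wt_set n q (J : seq (seq 'I_n)) a K : (a < q)%N ->
  (wt q (set_nth [::] J a K) + count (fun x : 'I_n => nat_of_ord x == a) (nth [::] J a) =
   wt q J + count (fun x : 'I_n => nat_of_ord x == a) K)%N.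
Proof.
move=> Ha; rewrite /wt (bigD1 (Ordinal Ha)) //= [in RHS](bigD1 (Ordinal Ha)) //= nth_set_nth /= eqxx.
rewrite (eq_bigr (fun b : 'I_q => count (fun x : 'I_n => nat_of_ord x == b) (nth [::] J b))).
  by lia.
move=> b Hb; rewrite nth_set_nth /=.
by move: Hb; rewrite -val_eqE /= => /negbTE ->.
Qed.

Definition Yf (R : realType) n (X : arr R n) q a := foldr (fun a Y => Bop a Y) X (iota a (q - a)).
Definition Iseq n q a : seq 'I_n.+1 := [seq inord i | i <- iota a (q - a)].
Definition beh n a (J : seq (seq 'I_n)) :=
  mkseq (fun b => if (a <= b)%N then behead (nth [::] J b) else nth [::] J b) (size J).

Lemma Yf_S (R : realType) n (X : arr R n) q a : (a < q)%N -> Yf X q a = Bop a (Yf X q a.+1).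
Proof. by move=> Ha; rewrite /Yf -(subnSK Ha). Qed.

Lemma Yf_q (R : realType) n (X : arr R n) q : Yf X q q = X.
Proof. by rewrite /Yf subnn. Qed.

Lemma Iseq_S n q a : (a < q)%N -> Iseq n q a = inord a :: Iseq n q a.+1.
Proof. by move=> Ha; rewrite /Iseq -(subnSK Ha). Qed.

Lemma Iseq_notin n q a : (q <= n.+1)%N -> (a < q)%N -> (inord a : 'I_n.+1) \notin Iseq n q a.+1.
Proof.
move=> Hq Ha; apply/mapP => [[i Hi Hia]]; move: Hi; rewrite mem_iota => Hi.
have := congr1 val Hia; rewrite /= !inordK; lia.
Qed.

Lemma vanish (R : realType) n (X : arr R n) q w :
  (forall I J, (w < wt q J)%N -> X I J = 0) ->
  forall d a, (a + d = q)%N -> forall I J, (w + d < wt q J)%N -> Yf X q a I J = 0.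
Proof.
move=> Hmax; elim=> [|d IH] a Had I J Hw.
  by rewrite addn0 in Had; subst; rewrite Yf_q; apply: Hmax; lia.
have Ha : (a < q)%N by lia.
rewrite Yf_S // /Bop; case: ifP => _ //.
rewrite big1 ?mulr0 // => tau _; rewrite big1 // => sg _.
rewrite (IH a.+1) ?mulr0 //; first by lia.
have h1 := wt_set J (behead (permseq tau)) Ha.
have h2 := count_behead_permseq (fun x : 'I_n => nat_of_ord x == a) tau.
lia.
Qed.

Lemma Yanti (R : realType) n (X : arr R n) q a :
  (forall I J (sigma : 'S_(size I)), X (permseq sigma) J = (-1) ^+ odd_perm sigma * X I J) ->
  (a <= q)%N -> forall I J (rho : 'S_(size I)),
  Yf X q a (permseq rho) J = (-1) ^+ odd_perm rho * Yf X q a I J.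
Proof.
move=> HX Ha I J rho; case: (ltngtP a q) Ha => // [Ha|->] _.
  by rewrite Yf_S // Bop_anti.
by rewrite Yf_q HX.
Qed.

Lemma pos_sum (R : realType) (T : finType) (F : T -> R) i0 :
  (forall i, 0 <= F i) -> 0 < F i0 -> 0 < \sum_i F i.
Proof.
move=> H0 H1; rewrite (bigD1 i0) //=; apply: (lt_le_trans H1).
by rewrite lerDl; apply: sumr_ge0 => i _.
Qed.

Lemma beh_q n q (J : seq (seq 'I_n)) : size J = q -> beh q J = J.
Proof.
move=> Hs; apply: (@eq_from_nth _ [::]); first by rewrite size_mkseq.
move=> i; rewrite size_mkseq => Hi; rewrite nth_mkseq //.
by have -> : (q <= i)%N = false by lia.
Qed.

Lemma beh_set n a (J : seq (seq 'I_n)) L : (a < size J)%N ->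
  beh a.+1 (set_nth [::] J a L) = set_nth [::] (beh a J) a L.
Proof.
move=> Ha; apply: (@eq_from_nth _ [::]).
  by rewrite size_mkseq !size_set_nth size_mkseq.
move=> i; rewrite size_mkseq size_set_nth => Hi.
have HiJ : (i < size J)%N by lia.
rewrite nth_mkseq ?size_set_nth // !nth_set_nth /= nth_mkseq //.
by case: (ltngtP i a).
Qed.

Lemma beh_X (R : realType) n (X : arr R n) :
  (forall I J (a : nat) (tau : 'S_(size (nth [::] J a))), (a < size J)%N ->
     X I (set_nth [::] J a (permseq tau)) = X I J) ->
  forall a J (tau : 'S_(size (nth [::] J a))), (a < size J)%N ->
  ohead (permseq tau) = ohead (nth [::] J a) ->
  X [::] (beh a.+1 (set_nth [::] J a (behead (permseq tau)))) = X [::] (beh a J).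
Proof.
move=> HX3 a J tau Ha Hh; rewrite beh_set //.
have Hp : perm_eq (behead (permseq tau)) (nth [::] (beh a J) a).
  rewrite nth_mkseq // leqnn; exact: perm_behead (perm_permseq tau) Hh.
have [p ->] := perm_eq_permseq Hp.
by apply: HX3; rewrite size_mkseq.
Qed.


From mathcomp Require Import ring.

Lemma eqSome n (u v : 'I_n) : (Some u == Some v) = (u == v).
Proof. by []. Qed.

Lemma permseq1 n (s : seq 'I_n) : permseq (1%g : 'S_(size s)) = s.
Proof.
apply: eq_seq_I; first by rewrite size_permseq.
move=> x0 i Hi; have Hi' : (i < size s)%N by move: Hi; rewrite size_permseq.
by rewrite (nth_permseq _ _ Hi') perm1.
Qed.

Lemma count_behead_ne n a (x : 'I_n) (K : seq 'I_n) (tau : 'S_(size K)) :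
  nat_of_ord x = a -> ohead (permseq tau) != Some x ->
  (count (fun y : 'I_n => nat_of_ord y == a) K <=
   count (fun y : 'I_n => nat_of_ord y == a) (behead (permseq tau)))%N.
Proof.
move=> Hxa; rewrite -(seq.permP (perm_permseq tau)).
case: (permseq tau) => [|y t] //= Hne.
have -> : (nat_of_ord y == a) = false.
  apply/negbTE/eqP => Hy; move/eqP: Hne; apply; congr Some; apply: val_inj => /=; by rewrite Hy Hxa.
by [].
Qed.

Lemma count_behead_eq n a (x : 'I_n) (K : seq 'I_n) (tau : 'S_(size K)) :
  nat_of_ord x = a -> ohead (permseq tau) = Some x ->
  (count (fun y : 'I_n => nat_of_ord y == a) K =
   count (fun y : 'I_n => nat_of_ord y == a) (behead (permseq tau)) + 1)%N.
Proof.
move=> Hxa; rewrite -(seq.permP (perm_permseq tau)).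
case: (permseq tau) => [|y t] //= [->]; rewrite Hxa eqxx; lia.
Qed.

Lemma sq_gt0 (R : realType) (x : R) : x != 0 -> 0 < x * x.
Proof. by move=> Hx; rewrite -expr2 exprn_even_gt0 //= Hx orbT. Qed.

Lemma key (R : realType) n (X : arr R n.+1) q w :
  (q <= n.+1)%N ->
  (forall I J (sigma : 'S_(size I)), X (permseq sigma) J = (-1) ^+ odd_perm sigma * X I J) ->
  (forall I J (a : nat) (tau : 'S_(size (nth [::] J a))), (a < size J)%N ->
     X I (set_nth [::] J a (permseq tau)) = X I J) ->
  (forall I J, (w < wt q J)%N -> X I J = 0) ->
  forall d a, (a + d = q)%N -> forall J, size J = q ->
   (forall b, (a <= b < q)%N -> ohead (nth [::] J b) = Some (inord b)) ->
   (w + d <= wt q J)%N -> X [::] (beh a J) != 0 ->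
   0 < Yf X q a (Iseq n q a) J * X [::] (beh a J).
Proof.
move=> Hq HX2 HX3 Hmax; elim=> [|d IH] a Had J HsJ Hhead Hw HV.
  rewrite addn0 in Had; subst a.
  by rewrite Yf_q /Iseq subnn /= beh_q // in HV *; apply: sq_gt0.
have Ha : (a < q)%N by lia.
set x : 'I_n.+1 := inord a.
set s := Iseq n q a.+1.
have Hxs : x \notin s by apply: Iseq_notin.
have Hxa : nat_of_ord x = a by rewrite /x inordK //; lia.
have HJa : ohead (nth [::] J a) = Some x by apply: Hhead; lia.
rewrite (@Yf_S _ _ X q a Ha) (@Iseq_S n q a Ha) -/x -/s.
set Y' := Yf X q a.+1.
rewrite /Bop ifT; last first.
  rewrite /= HsJ Ha /=; move: HJa; by case: (nth [::] J a).
rewrite -!mulrA; apply: mulr_gt0; first by rewrite invr_gt0 ltr0n fact_gt0.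
apply: mulr_gt0; first by rewrite invr_gt0 ltr0n fact_gt0.
rewrite mulr_suml; under eq_bigr do rewrite mulr_suml.
set V := X [::] (beh a J).
have Hbad : forall tau : 'S_(size (nth [::] J a)), ohead (permseq tau) != Some x ->
  \sum_(sg : 'S_(size (x :: s))) (-1) ^+ odd_perm sg *
      ((ohead (permseq sg) == ohead (permseq tau))%:R *
       Y' (behead (permseq sg)) (set_nth [::] J a (behead (permseq tau)))) * V = 0.
  move=> tau Hne; apply: big1 => sg _.
  rewrite /Y' (@vanish _ _ X q w Hmax d a.+1) ?mulr0 ?mul0r //; first by lia.
  have h1 := wt_set J (behead (permseq tau)) Ha.
  have h2 := count_behead_ne Hxa Hne.
  lia.
have Hgood : forall tau : 'S_(size (nth [::] J a)), ohead (permseq tau) = Some x ->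
  0 < \sum_(sg : 'S_(size (x :: s))) (-1) ^+ odd_perm sg *
      ((ohead (permseq sg) == ohead (permseq tau))%:R *
       Y' (behead (permseq sg)) (set_nth [::] J a (behead (permseq tau)))) * V.
  move=> tau Ht.
  set J2 := set_nth [::] J a (behead (permseq tau)).
  have HV2 : X [::] (beh a.+1 J2) = V by rewrite /J2 beh_X // ?HsJ // Ht HJa.
  have IH2 : 0 < Y' s J2 * V.
    rewrite -HV2; apply: IH; first by lia.
    - by rewrite /J2 size_set_nth HsJ; lia.
    - move=> b Hb; rewrite /J2 nth_set_nth /=.
      have -> : (b == a) = false by lia.
      by apply: Hhead; lia.
    - have h1 := wt_set J (behead (permseq tau)) Ha.
      have h2 := count_behead_eq Hxa Ht.
      rewrite /J2; lia.
    - by rewrite HV2.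
  rewrite (eq_bigr (fun sg : 'S_(size (x :: s)) => (sg ord0 == ord0)%:R *
     ((-1) ^+ odd_perm sg * Y' (behead (permseq sg)) J2 * V))); last first.
    move=> sg _; rewrite Ht ohead_permseq eqSome nth_head_eq //.
    by rewrite mulrCA -!mulrA.
  rewrite sum_lift0.
  rewrite (eq_bigr (fun _ => Y' s J2 * V)); last first.
    move=> rho _; rewrite behead_permseq_lift /Y' (@Yanti _ _ X q a.+1) // odd_lift_perm /=.
    by rewrite mulrA -expr2 sqrr_sign mul1r.
  by rewrite sumr_const pmulrn_lgt0 // card_Sn fact_gt0.
rewrite (bigD1 (1%g : 'S_(size (nth [::] J a)))) //=.
apply: lt_le_trans (Hgood 1%g _) _; first by rewrite permseq1 HJa.
rewrite lerDl; apply: sumr_ge0 => tau _.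
case: (ohead (permseq tau) =P Some x) => [Ht|/eqP Hne].
  exact: ltW (Hgood _ Ht).
by rewrite Hbad.
Qed.

From Stdlib Require Import FunctionalExtensionality.

Theorem mainTheorem1 (R : realType) (n q : nat) (r : seq nat) (X : arr R n) :
  (2 <= n)%N -> (2 <= q <= n)%N -> size r = q ->
  inH 0 r X ->
  foldr (fun a Y => Bop a Y) X (iota 0 q) = (fun _ _ => 0) ->
  X = (fun _ _ => 0).
Proof.
move=> Hn /andP[_ Hqn] Hr [HX1 HX2 HX3] Hfold.
case: n Hn Hqn X HX1 HX2 HX3 Hfold => [//|n] _ Hqn X HX1 HX2 HX3 Hfold.
apply: functional_extensionality => I; apply: functional_extensionality => J.
set M := (\sum_(b < q) nth 0%N r b)%N.
have Hbound : forall I J, X I J != 0 -> (wt q J <= M)%N.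
  move=> I' J' /HX1 [_ HJ]; rewrite /wt /M; apply: leq_sum => b _.
  rewrite -HJ; apply: leq_trans (count_size _ _) _.
  case: (ltnP b (size J')) => h; first by rewrite (nth_map [::]).
  by rewrite !nth_default ?size_map.
have S : forall k I J, (M < wt q J + k)%N -> X I J = 0.
  elim=> [|k IH] I' J' H.
    by case: (eqVneq (X I' J') 0) => // /Hbound; lia.
  case: (eqVneq (X I' J') 0) => // HXne.
  have Hmax : forall I J, (wt q J' < wt q J)%N -> X I J = 0.
    by move=> I2 J2 h; apply: IH; lia.
  have [HI HJ] := HX1 _ _ HXne.
  have HI0 : I' = [::] by apply: size0nil.
  rewrite HI0 in HXne *.
  have HsJ : size J' = q by rewrite -Hr -HJ size_map.
  set Jh := mkseq (fun b => (inord b : 'I_n.+1) :: nth [::] J' b) q.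
  have Hbeh : beh 0 Jh = J'.
    apply: (@eq_from_nth _ [::]); first by rewrite !size_mkseq HsJ.
    move=> i; rewrite !size_mkseq => Hi; rewrite nth_mkseq ?size_mkseq //.
    by rewrite nth_mkseq.
  have Hwt : wt q Jh = (wt q J' + q)%N.
    rewrite /wt (eq_bigr (fun b : 'I_q => 1 + count (fun x : 'I_n.+1 => nat_of_ord x == b) (nth [::] J' b))%N).
      by rewrite big_split /= sum_nat_const card_ord muln1 addnC.
    move=> b _; have hb : (b < n.+1)%N by have := ltn_ord b; lia.
    by rewrite nth_mkseq //= inordK ?eqxx.
  have := @key R n X q (wt q J') Hqn HX2 HX3 Hmax q 0 (add0n q) Jh.
  rewrite size_mkseq Hbeh Hwt /Yf subn0 Hfold mul0r ltxx => H0.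
  have Hheads : forall b, (0 <= b < q)%N -> ohead (nth [::] Jh b) = Some (inord b).
    by move=> b Hb; rewrite nth_mkseq //; case/andP: Hb.
  by move: (H0 erefl Hheads (leqnn _) HXne).
apply: (S M.+1); lia.
Qed.
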